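(* Let $p \in [0,1]$, $q=1-p$, and let $m, n \geq 1$ be integers. If $X$ is a $\mathrm{Bin}(n, p)$ random variable, then \[ \mathbb{E} |X - np|^{2m} \leq m \max\left(m^{2m-1} npq,\ e^{m-1}(m npq)^m\right). \] In particular, if $Z = X/n$, $\delta\in(0,1]$ and $n \geq 4m/\delta$, then \[ \mathbb{E} |Z - p|^{2m} \leq \delta^m (pq)^m + \delta^{2m-1} pq. \] *)

(* Defs.v *)
From Stdlib Require Import Reals Lra Lia.
Open Scope R_scope.

(* Expectation of g(X) for X ~ Bin(n, p):
   E g(X) = sum_{k=0}^{n} C(n,k) p^k (1-p)^(n-k) g(k).
   (sum_f_R0 f n = f 0 + ... + f n.) *)
Definition binom_expect (n : nat) (p : R) (g : nat -> R) : R :=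
  sum_f_R0 (fun k => C n k * p ^ k * (1 - p) ^ (n - k) * g k) n.

(* Main.v *)
Require Import Defs.
From Stdlib Require Import Reals Lra Lia Factorial.
Open Scope R_scope.

Lemma sum_swap (f : nat -> nat -> R) (N M : nat) :
  sum_f_R0 (fun i => sum_f_R0 (fun j => f i j) M) N =
  sum_f_R0 (fun j => sum_f_R0 (fun i => f i j) N) M.
Proof.
  induction N as [|N IH]; simpl.
  - apply sum_eq; intros; reflexivity.
  - rewrite IH, <- sum_plus. apply sum_eq; intros; reflexivity.
Qed.

Lemma sum_ext0 (f : nat -> R) (N K : nat) :
  (forall j, (N < j <= N + K)%nat -> f j = 0) ->
  sum_f_R0 f (N + K) = sum_f_R0 f N.
Proof.
  induction K as [|K IH]; intros H.
  - now rewrite Nat.add_0_r.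
  - rewrite Nat.add_succ_r, tech5, IH.
    + rewrite H; [ring| lia].
    + intros; apply H; lia.
Qed.

Lemma sum_zero (f : nat -> R) N : (forall j, (j <= N)%nat -> f j = 0) -> sum_f_R0 f N = 0.
Proof.
  intros H. rewrite (sum_eq _ (fun _ => 0)) by auto. rewrite sum_cte. ring.
Qed.

Lemma C_n_0 n : C n 0 = 1.
Proof. unfold C. rewrite Nat.sub_0_r. simpl. field. apply INR_fact_neq_0. Qed.

Lemma C_n_n n : C n n = 1.
Proof. unfold C. rewrite Nat.sub_diag. simpl. field. apply INR_fact_neq_0. Qed.

Lemma C_ge0 n k : 0 <= C n k.
Proof.
  unfold C. apply Rmult_le_pos. left; apply INR_fact_lt_0.
  left; apply Rinv_0_lt_compat, Rmult_lt_0_compat; apply INR_fact_lt_0.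
Qed.

Lemma exp_INR_pow (a : nat) : exp (INR a) = exp 1 ^ a.
Proof.
  induction a as [|a IH]. simpl. apply exp_0.
  rewrite S_INR, exp_plus, IH. simpl. ring.
Qed.

Lemma exp_pow' (x : R) (a : nat) : exp x ^ a = exp (INR a * x).
Proof.
  induction a as [|a IH]. simpl. rewrite Rmult_0_l, exp_0; ring.
  simpl pow. rewrite IH, S_INR, <- exp_plus. f_equal; ring.
Qed.

Lemma fact_lower (a : nat) : INR (S a) ^ (S a) <= INR (fact (S a)) * exp (INR a).
Proof.
  induction a as [|a IH].
  - simpl. rewrite exp_0. lra.
  - set (j := INR (S a)).
    assert (Hj : 0 < j) by (apply lt_0_INR; lia).
    assert (Hb : INR (S (S a)) ^ (S a) <= exp 1 * j ^ (S a)).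
    { replace (INR (S (S a))) with (j * (1 + / j)).
      2:{ unfold j; rewrite (S_INR (S a)); field. fold j; lra. }
      rewrite Rpow_mult_distr, (Rmult_comm (exp 1)). apply Rmult_le_compat_l.
      apply pow_le; lra.
      apply Rle_trans with (exp (/ j) ^ (S a)).
      apply pow_incr. split. assert (0 < /j) by (apply Rinv_0_lt_compat; lra). lra.
      left; apply exp_ineq1. apply Rinv_neq_0_compat; lra.
      rewrite exp_pow'. fold j. right; f_equal; field; lra. }
    replace (fact (S (S a))) with (S (S a) * fact (S a))%nat by reflexivity.
    rewrite mult_INR. replace (exp j) with (exp (INR a) * exp 1)
      by (unfold j; rewrite S_INR, exp_plus; ring).
    change (INR (S (S a)) ^ S (S a)) with (INR (S (S a)) * INR (S (S a)) ^ (S a)).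
    assert (0 < INR (S (S a))) by (apply lt_0_INR; lia).
    fold j in IH.
    apply Rle_trans with (INR (S (S a)) * (exp 1 * j ^ S a)).
    apply Rmult_le_compat_l; lra.
    assert (0 < exp 1) by apply exp_pos.
    replace (INR (S (S a)) * INR (fact (S a)) * (exp (INR a) * exp 1))
      with (INR (S (S a)) * (exp 1 * (INR (fact (S a)) * exp (INR a)))) by ring.
    apply Rmult_le_compat_l; [lra|]. apply Rmult_le_compat_l; [lra|]. exact IH.
Qed.

Lemma key_term (a b : nat) (x : R) : 0 <= x ->
  INR (S a) ^ (2 * (S a + b)) / INR (fact (S a)) * x ^ (S a) <=
  Rmax (INR (S a + b) ^ (2 * (S a + b) - 1) * x)
       (exp (INR (S a + b) - 1) * (INR (S a + b) * x) ^ (S a + b)).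
Proof.
  intros Hx.
  set (m := (S a + b)%nat).
  set (j := INR (S a)). set (mm := INR m). set (E := exp 1).
  assert (Hj : 0 < j) by (apply lt_0_INR; lia).
  assert (Hjm : j <= mm) by (apply le_INR; unfold m; lia).
  assert (HE : 0 < E) by apply exp_pos.
  assert (Hf : 0 < INR (fact (S a))) by apply INR_fact_lt_0.
  assert (H1 : j ^ (2 * m) / INR (fact (S a)) * x ^ S a <= E ^ a * mm ^ (m + b) * x ^ S a).
  { apply Rmult_le_compat_r. apply pow_le; lra.
    replace (2 * m)%nat with (S a + (m + b))%nat by (unfold m; lia).
    rewrite pow_add.
    pose proof (fact_lower a) as Hl. fold j in Hl. rewrite exp_INR_pow in Hl. fold E in Hl.
    unfold Rdiv. rewrite Rmult_assoc, (Rmult_comm (j ^ (m+b))), <- Rmult_assoc.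
    apply Rmult_le_compat.
    - apply Rmult_le_pos. apply pow_le; lra. left; apply Rinv_0_lt_compat; lra.
    - apply pow_le; lra.
    - apply (Rmult_le_reg_r (INR (fact (S a)))); [lra|].
      rewrite Rmult_assoc, Rinv_l by lra. lra.
    - apply pow_incr; lra. }
  eapply Rle_trans; [exact H1|].
  destruct (Rle_lt_dec (E * x) mm) as [Hc|Hc].
  - eapply Rle_trans; [|apply Rmax_l].
    replace (2 * m - 1)%nat with ((m + b) + a)%nat by (unfold m; lia).
    rewrite (pow_add mm (m + b) a). change (x ^ S a) with (x * x ^ a).
    apply Rle_trans with (x * mm ^ (m + b) * (E * x) ^ a).
    + rewrite Rpow_mult_distr. right; ring.
    + replace (mm ^ (m + b) * mm ^ a * x) with (x * (mm ^ (m + b) * mm ^ a)) by ring. rewrite Rmult_assoc. apply Rmult_le_compat_l; [lra|].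
      apply Rmult_le_compat_l. apply pow_le; lra.
      apply pow_incr. split; [apply Rmult_le_pos; lra | lra].
  - eapply Rle_trans; [|apply Rmax_r].
    replace (mm - 1) with (INR (a + b)) by (unfold mm, m; rewrite plus_INR, plus_INR, S_INR; ring).
    rewrite exp_INR_pow. fold E. rewrite Rpow_mult_distr.
    replace (x ^ m) with (x ^ S a * x ^ b) by (unfold m; rewrite pow_add; ring).
    rewrite !pow_add.
    apply Rle_trans with (E ^ a * mm ^ m * x ^ S a * mm ^ b); [right; ring|].
    match goal with |- _ <= ?R => replace R with (E ^ a * mm ^ m * x ^ S a * (E * x) ^ b)
      by (rewrite Rpow_mult_distr; ring) end.
    apply Rmult_le_compat_l.
    repeat apply Rmult_le_pos; try apply pow_le; lra.
    apply pow_incr. split. apply (Rle_trans _ j); [lra|exact Hjm]. lra.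
Qed.

Definition dco (k j : nat) : R := if Nat.leb (2*j) k then INR j ^ k / INR (fact j) else 0.
Definition bp (k : nat) (x : R) : R := sum_f_R0 (fun j => dco k j * x ^ j) k.
Definition ind0 (i : nat) : R := match i with O => 1 | _ => 0 end.
Definition ind2 (i : nat) : R := match i with O | S O => 0 | _ => 1 end.
Definition nu (y : R) (i : nat) : R := ind0 i + y * ind2 i.

Lemma dco_val k j : (2*j <= k)%nat -> dco k j = INR j ^ k / INR (fact j).
Proof. intros H. unfold dco. apply Nat.leb_le in H. now rewrite H. Qed.

Lemma dco_zero k j : (k < 2*j)%nat -> dco k j = 0.
Proof. intros H. unfold dco. destruct (Nat.leb (2*j) k) eqn:E; [apply Nat.leb_le in E; lia|auto]. Qed.

Lemma dco_le k j : 0 <= dco k j <= INR j ^ k / INR (fact j).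
Proof.
  assert (0 <= INR j ^ k / INR (fact j)).
  { unfold Rdiv; apply Rmult_le_pos. apply pow_le, pos_INR.
    left; apply Rinv_0_lt_compat, INR_fact_lt_0. }
  unfold dco; destruct (Nat.leb (2*j) k); lra.
Qed.

Lemma bern (x y : R) (j : nat) : 0 <= x -> 0 <= y ->
  x ^ j + INR j * y * x ^ (j - 1) <= (x + y) ^ j.
Proof.
  intros Hx Hy. induction j as [|j IH].
  - simpl. lra.
  - destruct j as [|j].
    + simpl. lra.
    + replace (S (S j) - 1)%nat with (S j) in * by lia.
      replace (S j - 1)%nat with j in IH by lia.
      change ((x + y) ^ S (S j)) with ((x + y) * (x + y) ^ S j).
      apply Rle_trans with ((x + y) * (x ^ S j + INR (S j) * y * x ^ j)).
      2:{ apply Rmult_le_compat_l; lra. }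
      rewrite (S_INR (S j)).
      change (x ^ S (S j)) with (x * x ^ S j).
      change (x ^ S j) with (x * x ^ j).
      assert (0 <= x ^ j) by (apply pow_le; lra).
      assert (0 <= INR (S j)) by apply pos_INR.
      assert (0 <= INR (S j) * y * y * x ^ j) by (repeat apply Rmult_le_pos; lra).
      rewrite S_INR in *. nra.
Qed.

Lemma bp_ext k i x : (i <= k)%nat ->
  bp (k - i) x = sum_f_R0 (fun j => dco (k - i) j * x ^ j) k.
Proof.
  intros H. unfold bp.
  replace k with ((k - i) + i)%nat at 2 by lia.
  rewrite sum_ext0; [reflexivity|].
  intros j Hj. rewrite dco_zero by lia. ring.
Qed.

Lemma coef_bound k j y : 0 <= y ->
  sum_f_R0 (fun i => C k i * nu y i * dco (k - i) j) k <= dco k j + INR (S j) * dco k (S j) * y.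
Proof.
  intros Hy.
  rewrite (sum_eq _ (fun i => C k i * ind0 i * dco (k - i) j + (C k i * ind2 i * dco (k - i) j) * y))
    by (intros; unfold nu; ring).
  rewrite sum_plus, <- scal_sum.
  rewrite <- (Nat.add_0_l k) at 1.
  rewrite sum_ext0.
  2:{ intros i Hi. destruct i; [lia|]. simpl ind0. ring. }
  simpl sum_f_R0. rewrite C_n_0, Nat.sub_0_r. simpl ind0.
  replace (1 * 1 * dco k j) with (dco k j) by ring.
  apply Rplus_le_compat_l. rewrite Rmult_comm. apply Rmult_le_compat_r; [exact Hy|].
  destruct (Compare_dec.le_lt_dec (2 * S j) k) as [Hc|Hc].
  - rewrite dco_val by exact Hc.
    apply Rle_trans with (sum_f_R0 (fun i => C k i * 1 ^ i * INR j ^ (k - i)) k / INR (fact j)).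
    + unfold Rdiv. rewrite Rmult_comm, scal_sum. apply sum_Rle. intros i Hi.
      rewrite pow1.
      pose proof (dco_le (k - i) j) as [H0 H1].
      pose proof (C_ge0 k i).
      assert (0 <= ind2 i <= 1) by (destruct i as [|[|]]; simpl; lra).
      unfold Rdiv in H1.
      assert (0 <= INR j ^ (k - i)) by (apply pow_le, pos_INR).
      assert (0 < / INR (fact j)) by (apply Rinv_0_lt_compat, INR_fact_lt_0).
      apply Rle_trans with (C k i * 1 * (INR j ^ (k - i) * / INR (fact j))).
      * apply Rmult_le_compat; try nra.
      * right; ring.
    + rewrite <- binomial.
      replace (fact (S j)) with (S j * fact j)%nat by reflexivity.
      rewrite mult_INR. rewrite (S_INR j). 
      pose proof (INR_fact_lt_0 j). pose proof (pos_INR j).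
      apply Req_le. rewrite (Rplus_comm 1). field. lra.
  - rewrite dco_zero by lia. rewrite Rmult_0_r.
    right. apply sum_zero. intros i Hi.
    destruct i as [|[|i]]; simpl ind2; try ring.
    rewrite dco_zero by lia. ring.
Qed.

Lemma lemA k x y : 0 <= x -> 0 <= y ->
  sum_f_R0 (fun i => C k i * nu y i * bp (k - i) x) k <= bp k (x + y).
Proof.
  intros Hx Hy.
  rewrite (sum_eq _ (fun i => sum_f_R0 (fun j => C k i * nu y i * dco (k - i) j * x ^ j) k)).
  2:{ intros i Hi. rewrite bp_ext by exact Hi. rewrite scal_sum. apply sum_eq; intros; ring. }
  rewrite sum_swap.
  apply Rle_trans with (sum_f_R0 (fun j => (dco k j + INR (S j) * dco k (S j) * y) * x ^ j) k).
  { apply sum_Rle. intros j Hj.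
    rewrite <- scal_sum, Rmult_comm. apply Rmult_le_compat_r. apply pow_le; lra.
    apply coef_bound; exact Hy. }
  rewrite (sum_eq _ (fun j => dco k j * x ^ j + INR (S j) * dco k (S j) * y * x ^ (S j - 1)))
    by (intros; simpl (S _ - 1)%nat; rewrite Nat.sub_0_r; ring).
  rewrite sum_plus.
  apply Rle_trans with (sum_f_R0 (fun j => dco k j * x ^ j + INR j * dco k j * y * x ^ (j - 1)) k).
  { rewrite sum_plus. apply Rplus_le_compat_l.
    set (g := fun j => INR j * dco k j * y * x ^ (j - 1)).
    change (sum_f_R0 (fun j => g (S j)) k <= sum_f_R0 g k).
    right.
    assert (E1 : sum_f_R0 g (S k) = g O + sum_f_R0 (fun j => g (S j)) k).
    { rewrite decomp_sum by lia. reflexivity. }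
    rewrite tech5 in E1.
    assert (g O = 0) by (unfold g; simpl; ring).
    assert (g (S k) = 0) by (unfold g; rewrite dco_zero by lia; ring).
    lra. }
  unfold bp. apply sum_Rle. intros j Hj.
  pose proof (bern x y j Hx Hy). pose proof (dco_le k j) as [H0 _].
  apply Rle_trans with (dco k j * (x ^ j + INR j * y * x ^ (j - 1))).
  right; ring. apply Rmult_le_compat_l; lra.
Qed.


Lemma split_be n p g :
  binom_expect (S n) p g = p * binom_expect n p (fun i => g (S i)) + (1 - p) * binom_expect n p g.
Proof.
  unfold binom_expect. set (q := 1 - p).
  destruct n as [|n].
  - simpl. rewrite !C_n_0. rewrite (C_n_n 1). ring.
  - rewrite decomp_sum by lia. simpl pred. rewrite tech5.
    rewrite (tech5 (fun i => C (S n) i * p ^ i * q ^ (S n - i) * g (S i))).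
    rewrite (decomp_sum (fun i => C (S n) i * p ^ i * q ^ (S n - i) * g i)) by lia. simpl pred.
    rewrite (sum_eq (fun i => C (S (S n)) (S i) * p ^ S i * q ^ (S (S n) - S i) * g (S i))
      (fun i => (C (S n) i * p ^ i * q ^ (S n - i) * g (S i)) * p +
                (C (S n) (S i) * p ^ S i * q ^ (S n - S i) * g (S i)) * q)).
    2:{ intros i Hi. rewrite <- pascal by lia.
        replace (S (S n) - S i)%nat with (S (n - i)) by lia.
        replace (S n - i)%nat with (S (n - i)) by lia.
        replace (S n - S i)%nat with (n - i)%nat by lia.
        simpl pow. ring. }
    rewrite sum_plus, <- !scal_sum.
    rewrite !C_n_0, !C_n_n, !Nat.sub_diag, !Nat.sub_0_r.
    simpl pow. ring.
Qed.

Lemma be_sum n p (c : nat -> R) (h : nat -> nat -> R) K :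
  binom_expect n p (fun i => sum_f_R0 (fun j => c j * h j i) K) =
  sum_f_R0 (fun j => c j * binom_expect n p (h j)) K.
Proof.
  unfold binom_expect.
  rewrite (sum_eq _ (fun i => sum_f_R0 (fun j => c j * h j i * (C n i * p ^ i * (1 - p) ^ (n - i))) K)).
  2:{ intros i _. rewrite <- scal_sum. ring. }
  rewrite sum_swap. apply sum_eq. intros j _.
  rewrite scal_sum. apply sum_eq; intros; ring.
Qed.

Definition Mom p k n := binom_expect n p (fun i => (INR i - INR n * p) ^ k).
Definition mu p i := p * (1 - p) ^ i + (1 - p) * (- p) ^ i.

Lemma be_ext n p f g : (forall i, f i = g i) -> binom_expect n p f = binom_expect n p g.
Proof. intros H. unfold binom_expect. apply sum_eq; intros; rewrite H; reflexivity. Qed.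

Lemma Mom_rec p k n :
  Mom p k (S n) = sum_f_R0 (fun j => C k j * mu p j * Mom p (k - j) n) k.
Proof.
  unfold Mom. rewrite split_be.
  rewrite (be_ext n p _ (fun i => sum_f_R0 (fun j => (C k j * (1 - p) ^ j) * (INR i - INR n * p) ^ (k - j)) k)).
  2:{ intros i. rewrite <- binomial. f_equal. rewrite !S_INR. ring. }
  rewrite (be_ext n p (fun i => (INR i - INR (S n) * p) ^ k)
     (fun i => sum_f_R0 (fun j => (C k j * (- p) ^ j) * (INR i - INR n * p) ^ (k - j)) k)).
  2:{ intros i. rewrite <- binomial. f_equal. rewrite !S_INR. ring. }
  rewrite !be_sum. rewrite !scal_sum, <- sum_plus.
  apply sum_eq. intros j _. unfold mu. ring.
Qed.

Lemma pow_le_self q n : 0 <= q <= 1 -> q ^ S n <= q.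
Proof.
  intros H. simpl. assert (q ^ n <= 1).
  { rewrite <- (pow1 n). apply pow_incr; lra. }
  assert (0 <= q ^ n) by (apply pow_le; lra). nra.
Qed.

Lemma mu_bound p j : 0 <= p <= 1 -> Rabs (mu p j) <= nu (p * (1 - p)) j.
Proof.
  intros Hp. unfold mu, nu.
  destruct j as [|[|j]]; simpl ind0; simpl ind2.
  - simpl. rewrite Rabs_right; lra.
  - simpl. replace (p * ((1 - p) * 1) + (1 - p) * (- p * 1)) with 0 by ring.
    rewrite Rabs_R0. lra.
  - eapply Rle_trans; [apply Rabs_triang|].
    rewrite !Rabs_mult, <- !RPow_abs, Rabs_Ropp.
    rewrite (Rabs_right p), (Rabs_right (1 - p)) by lra.
    assert (H1 : (1 - p) ^ S j <= 1 - p) by (apply pow_le_self; lra).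
    assert (H2 : p ^ S j <= p) by (apply pow_le_self; lra).
    change ((1 - p) ^ S (S j)) with ((1 - p) * (1 - p) ^ S j).
    change (p ^ S (S j)) with (p * p ^ S j).
    assert (0 <= p * (1 - p)) by nra.
    nra.
Qed.

Lemma bp_0 k : bp k 0 = 0 ^ k.
Proof.
  unfold bp. pose proof (sum_ext0 (fun j => dco k j * 0 ^ j) 0 k) as H.
  rewrite Nat.add_0_l in H. rewrite H.
  - simpl. rewrite dco_val by lia. simpl. field.
  - intros j Hj. rewrite pow_i by lia. ring.
Qed.

Lemma bp_ge0 k x : 0 <= x -> 0 <= bp k x.
Proof.
  intros Hx. unfold bp. rewrite <- (Rmult_0_l (INR (S k))), <- sum_cte.
  apply sum_Rle. intros j _. pose proof (dco_le k j). apply Rmult_le_pos. lra. apply pow_le; lra.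
Qed.

Lemma nu_ge0 y j : 0 <= y -> 0 <= nu y j.
Proof. intros. unfold nu. destruct j as [|[|j]]; simpl; lra. Qed.

Lemma Mom_bound p : 0 <= p <= 1 ->
  forall n k, Rabs (Mom p k n) <= bp k (INR n * (p * (1 - p))).
Proof.
  intros Hp. set (y := p * (1 - p)). assert (Hy : 0 <= y) by (unfold y; nra).
  induction n as [|n IH]; intros k.
  - unfold Mom, binom_expect. simpl. rewrite C_n_0, !Rmult_0_l, bp_0.
    replace (1 * 1 * 1 * (0 - 0) ^ k) with (0 ^ k) by (rewrite Rminus_0_r; ring).
    rewrite Rabs_right. lra. apply Rle_ge, pow_le; lra.
  - rewrite Mom_rec. eapply Rle_trans; [apply sum_f_R0_triangle|].
    replace (INR (S n) * y) with (INR n * y + y) by (rewrite S_INR; ring).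
    eapply Rle_trans; [|apply lemA; [apply Rmult_le_pos; [apply pos_INR|exact Hy]|exact Hy]].
    apply sum_Rle. intros j _.
    rewrite !Rabs_mult. rewrite (Rabs_right (C k j)) by (apply Rle_ge, C_ge0).
    apply Rmult_le_compat.
    + apply Rmult_le_pos. apply C_ge0. apply Rabs_pos.
    + apply Rabs_pos.
    + apply Rmult_le_compat_l. apply C_ge0. apply mu_bound; exact Hp.
    + apply IH.
Qed.

Lemma ind_sum (m N : nat) (c : R) :
  sum_f_R0 (fun j => if andb (Nat.leb 1 j) (Nat.leb j m) then c else 0) N = INR (Nat.min N m) * c.
Proof.
  induction N as [|N IH].
  - simpl. ring.
  - rewrite tech5, IH.
    destruct (Nat.leb (S N) m) eqn:E.
    + apply Nat.leb_le in E. simpl andb.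
      replace (Nat.min (S N) m) with (S N) by lia. replace (Nat.min N m) with N by lia.
      rewrite S_INR. ring.
    + apply Nat.leb_gt in E. simpl andb.
      replace (Nat.min (S N) m) with m by lia. replace (Nat.min N m) with m by lia. ring.
Qed.

Lemma bp_final (m : nat) (x : R) : (1 <= m)%nat -> 0 <= x ->
  bp (2 * m) x <= INR m * Rmax (INR m ^ (2 * m - 1) * x) (exp (INR m - 1) * (INR m * x) ^ m).
Proof.
  intros Hm Hx. set (R0 := Rmax _ _).
  unfold bp.
  apply Rle_trans with (sum_f_R0 (fun j => if andb (Nat.leb 1 j) (Nat.leb j m) then R0 else 0) (2 * m)).
  2:{ rewrite ind_sum. replace (Nat.min (2 * m) m) with m by lia. right; ring. }
  apply sum_Rle. intros j Hj.
  destruct j as [|a].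
  - simpl andb. rewrite dco_val by lia. rewrite pow_i by lia. unfold Rdiv. right; ring.
  - destruct (Nat.leb (S a) m) eqn:E.
    + simpl andb. change (if true then R0 else 0) with R0; unfold R0. apply Nat.leb_le in E.
      rewrite dco_val by lia.
      destruct (Nat.le_exists_sub (S a) m E) as [b [Hb _]].
      subst m. replace (b + S a)%nat with (S a + b)%nat in * by lia.
      apply key_term. exact Hx.
    + simpl andb. apply Nat.leb_gt in E.
      rewrite dco_zero by lia. right; ring.
Qed.

Lemma L4 a : INR (S a) * 3 ^ a <= 4 ^ (S a).
Proof.
  induction a as [|a IH].
  - simpl. lra.
  - rewrite S_INR. change (3 ^ S a) with (3 * 3 ^ a). change (4 ^ S (S a)) with (4 * 4 ^ S a).
    assert (3 ^ S a <= 4 ^ S a) by (apply pow_incr; lra).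
    change (3 ^ S a) with (3 * 3 ^ a) in H.
    nra.
Qed.

Lemma Rabs_pow_even (z : R) (m : nat) : Rabs z ^ (2 * m) = z ^ (2 * m).
Proof.
  rewrite !pow_mult. f_equal. rewrite RPow_abs. apply Rabs_right.
  apply Rle_ge, pow2_ge_0.
Qed.

Lemma be_scal n p f c : binom_expect n p (fun k => f k * c) = binom_expect n p f * c.
Proof. unfold binom_expect. rewrite Rmult_comm, scal_sum. apply sum_eq; intros; ring. Qed.

Lemma L5 a : INR (S a) <= 4 ^ (S (2 * a)).
Proof.
  pose proof (L4 a). assert (1 <= 3 ^ a) by (apply pow_R1_Rle; lra).
  assert (4 ^ S a <= 4 ^ S (2 * a)) by (apply Rle_pow; [lra|lia]).
  pose proof (pos_INR (S a)). nra.
Qed.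

Theorem lemma17 (p : R) (m n : nat) :
  0 <= p <= 1 -> (1 <= m)%nat -> (1 <= n)%nat ->
  let q := 1 - p in
  binom_expect n p (fun k => Rabs (INR k - INR n * p) ^ (2 * m))
    <= INR m * Rmax (INR m ^ (2 * m - 1) * (INR n * p * q))
                    (exp (INR m - 1) * (INR m * INR n * p * q) ^ m)
  /\
  (forall delta : R, 0 < delta <= 1 -> INR n >= 4 * INR m / delta ->
     binom_expect n p (fun k => Rabs (INR k / INR n - p) ^ (2 * m))
       <= delta ^ m * (p * q) ^ m + delta ^ (2 * m - 1) * (p * q)).
Proof.
  intros Hp Hm Hn q.
  set (s := p * q). assert (Hs : 0 <= s) by (unfold s, q; nra).
  set (x := INR n * s). assert (Hx : 0 <= x) by (unfold x; apply Rmult_le_pos; [apply pos_INR|lra]).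
  assert (HM : Mom p (2 * m) n <= INR m * Rmax (INR m ^ (2 * m - 1) * x) (exp (INR m - 1) * (INR m * x) ^ m)).
  { eapply Rle_trans; [apply Rle_abs|]. eapply Rle_trans; [apply Mom_bound; exact Hp|].
    apply bp_final; [exact Hm|exact Hx]. }
  split.
  - replace (INR n * p * q) with x by (unfold x, s; ring).
    replace (INR m * INR n * p * q) with (INR m * x) by (unfold x, s; ring).
    unfold Mom in HM. rewrite (be_ext n p _ (fun i => (INR i - INR n * p) ^ (2 * m))).
    exact HM. intros i; apply Rabs_pow_even.
  - intros delta Hd HnD.
    set (N := INR n). assert (HN : 0 < N) by (apply lt_0_INR; lia).
    set (iN := / N). assert (HiN : N * iN = 1) by (unfold iN; field; lra).
    assert (HiN0 : 0 < iN) by (apply Rinv_0_lt_compat; lra).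
    rewrite (be_ext n p _ (fun i => (INR i - INR n * p) ^ (2 * m) * iN ^ (2 * m))).
    2:{ intros i. rewrite Rabs_pow_even, <- Rpow_mult_distr. f_equal. unfold iN, N. field. apply Rgt_not_eq; exact HN. }
    rewrite be_scal. fold (Mom p (2 * m) n).
    set (D := delta * N).
    assert (HD : 4 * INR m <= D).
    { unfold D. apply Rge_le in HnD. fold N in HnD.
      apply (Rmult_le_compat_l delta) in HnD; [|lra].
      replace (delta * (4 * INR m / delta)) with (4 * INR m) in HnD by (field; lra). lra. }
    assert (Hdel : delta = D * iN) by (unfold D; rewrite Rmult_assoc, HiN; ring).
    assert (Hpi : 0 <= iN ^ (2 * m)) by (apply pow_le; lra).
    eapply Rle_trans; [apply Rmult_le_compat_r; [exact Hpi|exact HM]|].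
    destruct m as [|a]; [lia|].
    set (Mv := INR (S a)). assert (HMv : 1 <= Mv) by (unfold Mv; rewrite S_INR; pose proof (pos_INR a); lra).
    replace (2 * S a - 1)%nat with (S (2 * a)) by lia.
    set (K := S (2 * a)).
    replace (Mv - 1) with (INR a) by (unfold Mv; rewrite S_INR; ring).
    rewrite exp_INR_pow.
    set (Ea := exp 1 ^ a).
    assert (HEa : 0 <= Ea <= 3 ^ a).
    { unfold Ea. split. apply pow_le; left; apply exp_pos.
      apply pow_incr. split; [left; apply exp_pos| apply exp_le_3]. }
    set (A := Mv ^ K * x). set (B := Ea * (Mv * x) ^ S a).
    assert (HA : 0 <= A) by (unfold A; apply Rmult_le_pos; [apply pow_le; lra|lra]).
    assert (HB : 0 <= B) by (unfold B; apply Rmult_le_pos; [lra|apply pow_le; nra]).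
    assert (Hmax : Rmax A B <= A + B) by (unfold Rmax; destruct (Rle_dec A B); lra).
    apply Rle_trans with (Mv * A * iN ^ (2 * S a) + Mv * B * iN ^ (2 * S a)).
    { rewrite <- Rmult_plus_distr_r, <- Rmult_plus_distr_l.
      apply Rmult_le_compat_r; [exact Hpi|]. apply Rmult_le_compat_l; lra. }
    rewrite Rplus_comm. apply Rplus_le_compat.
    +
      replace (iN ^ (2 * S a)) with (iN ^ S a * iN ^ S a) by (rewrite <- pow_add; f_equal; lia).
      unfold B, x. fold N. rewrite Hdel, !Rpow_mult_distr.
      replace (Mv * (Ea * (Mv ^ S a * (N ^ S a * s ^ S a))) * (iN ^ S a * iN ^ S a))
        with ((Mv * Ea * Mv ^ S a) * (s ^ S a * iN ^ S a) * (N * iN) ^ S a)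
        by (rewrite Rpow_mult_distr; ring).
      rewrite HiN, pow1, Rmult_1_r.
      replace (D ^ S a * iN ^ S a * s ^ S a) with (D ^ S a * (s ^ S a * iN ^ S a)) by ring.
      apply Rmult_le_compat_r. apply Rmult_le_pos; apply pow_le; lra.
      apply Rle_trans with (Mv * 3 ^ a * Mv ^ S a).
      { apply Rmult_le_compat_r. apply pow_le; lra. apply Rmult_le_compat_l; lra. }
      apply Rle_trans with ((4 * Mv) ^ S a).
      { rewrite Rpow_mult_distr. apply Rmult_le_compat_r. apply pow_le; lra. apply L4. }
      apply pow_incr. fold Mv in HD. lra.
    +
      replace (iN ^ (2 * S a)) with (iN * iN ^ K) by (unfold K; rewrite <- (pow_1 iN) at 1; rewrite <- pow_add; f_equal; lia).
      unfold A, x. fold N. rewrite Hdel, Rpow_mult_distr.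
      replace (Mv * (Mv ^ K * (N * s)) * (iN * iN ^ K)) with ((Mv * Mv ^ K) * (s * iN ^ K) * (N * iN)) by ring.
      rewrite HiN, Rmult_1_r.
      replace (D ^ K * iN ^ K * s) with (D ^ K * (s * iN ^ K)) by ring.
      apply Rmult_le_compat_r. apply Rmult_le_pos; [lra|apply pow_le; lra].
      apply Rle_trans with ((4 * Mv) ^ K).
      { rewrite Rpow_mult_distr. apply Rmult_le_compat_r. apply pow_le; lra. apply L5. }
      apply pow_incr. fold Mv in HD. lra.
Qed.
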